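(* Let $G$ be a free abelian group with a basis $E$, let $e\in E$, let $\check G$ be the subgroup generated by $E\setminus\{e\}$, and let $\lambda$ be the shift on $(G,e)^{\otimes\mathbb{Z}}$. If $z\in(G,e)^{\otimes\mathbb{Z}}$ and $w\in H(G,e)$ satisfy $(\mathrm{id}-\lambda)(z)=w$, then $z\in\mathbb{Z}e^{\otimes\mathbb{Z}}$ and $w=0$.
   Context: $(G,e)^{\otimes\mathbb{Z}}$ is the inductive limit of $G\to G^{\otimes3}\to G^{\otimes5}\to\cdots$ (tensor products over $\mathbb{Z}$) with connecting maps $x\mapsto e\otimes x\otimes e$; equivalently it is the span of formal tensors $\bigotimes_{i\in\mathbb{Z}}x_i$ with $x_i\in G$ and $x_i=e$ for all but finitely many $i$ (with $G^{\otimes 2n-1}$ identified with the span of those with $x_i=e$ for $|i|\ge n$). $e^{\otimes\mathbb{Z}}=\bigotimes_{i\in\mathbb{Z}}e$. The shift $\lambda$ is the automorphism with $\lambda(\bigotimes_i x_i)=\bigotimes_i x_{i-1}$. $\check G\otimes G^{\otimes\mathbb{N}}$ denotes the span of those $\bigotimes_i x_i$ with $x_0\in\check G$ and $x_i=e$ for all $i<0$, and $H(G,e):=\mathbb{Z}e^{\otimes\mathbb{Z}}+\check G\otimes G^{\otimes\mathbb{N}}$. *)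

(* Defs.v *)
(* Concrete model of (G,e)^{\otimes Z} for G free abelian on a basis E:
   G^{\otimes Z} is the free abelian group on the "basis words"
   u : Z -> E with u i = e for all but finitely many i (the pure tensors
   \bigotimes_i u_i of basis elements). *)
From Stdlib Require Import ZArith List.
Open Scope Z_scope.

Definition fin_supp {X : Type} (f : X -> Z) : Prop :=
  exists l : list X, forall x, f x <> 0 -> In x l.

Definition almost_e {E : Type} (e : E) (u : Z -> E) : Prop :=
  exists N : nat, forall i : Z, Z.of_nat N <= Z.abs i -> u i = e.

Definition tensorZ {E : Type} (e : E) (z : (Z -> E) -> Z) : Prop :=
  fin_supp z /\ forall u, z u <> 0 -> almost_e e u.

(* the shift lambda(\bigotimes_i x_i) = \bigotimes_i x_{i-1}; on coefficient
   functions: (lambda z)(u) = z(i |-> u (i+1)) *)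
Definition shiftT {E : Type} (z : (Z -> E) -> Z) : (Z -> E) -> Z :=
  fun u => z (fun i => u (i + 1)).

Definition e_word {E : Type} (e : E) : Z -> E := fun _ => e.

Definition in_Ze {E : Type} (e : E) (z : (Z -> E) -> Z) : Prop :=
  forall u, u <> e_word e -> z u = 0.

(* w \in H(G,e) = Z e^{\otimes Z} + \check G \otimes G^{\otimes N}; since \check G
   is spanned by E \ {e}, \check G \otimes G^{\otimes N} is spanned by the basis
   words u with u 0 <> e and u i = e for all i < 0. *)
Definition in_H {E : Type} (e : E) (w : (Z -> E) -> Z) : Prop :=
  tensorZ e w /\
  forall u, w u <> 0 ->
    u = e_word e \/ (u 0 <> e /\ forall i, i < 0 -> u i = e).

(* Main.v *)
Require Import Defs.
From Stdlib Require Import ZArith List Lia Classical FunctionalExtensionality.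
Open Scope Z_scope.

Lemma unif_bound (E : Type) (e : E) (z : (Z -> E) -> Z) (l : list (Z -> E)) :
  (forall x, z x <> 0 -> almost_e e x) ->
  exists N : nat, forall x, In x l -> z x <> 0 ->
    forall i, Z.of_nat N <= Z.abs i -> x i = e.
Proof.
  intros Hal. induction l as [|a l IH].
  - exists 0%nat. intros x [].
  - destruct IH as [N1 H1].
    destruct (Z.eq_dec (z a) 0) as [Ha|Ha].
    + exists N1. intros x [<-|Hx] Hz i Hi; [contradiction|]. apply (H1 x Hx Hz i Hi).
    + destruct (Hal a Ha) as [Na HNa]. exists (N1 + Na)%nat.
      intros x [<-|Hx] Hz i Hi.
      * apply HNa. lia.
      * apply (H1 x Hx Hz i). lia.
Qed.

Theorem lemma2 (E : Type) (e : E) (z w : (Z -> E) -> Z) :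
  tensorZ e z -> in_H e w ->
  (forall u, z u - shiftT z u = w u) ->
  in_Ze e z /\ (forall u, w u = 0).
Proof.
  intros [[l Hl] Hal] [_ Hw] Heq.
  destruct (unif_bound E e z l Hal) as [N HN].
  assert (HB : forall x, z x <> 0 -> forall i, Z.of_nat N <= Z.abs i -> x i = e).
  { intros x Hx. apply HN; auto. }
  assert (A : forall u j, u j <> e -> z u = 0).
  { intros u j Hj.
    set (v := fun k => fun i => u (i + k)).
    set (f := fun k => z (v k)).
    assert (fz : forall k, Z.of_nat N <= Z.abs (j - k) -> f k = 0).
    { intros k Hk. destruct (Z.eq_dec (f k) 0) as [H|H]; auto.
      exfalso. apply Hj. pose proof (HB _ H _ Hk) as Hx. unfold v in Hx.
      rewrite Z.sub_add in Hx. exact Hx. }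
    assert (fstep : forall k, f k - f (k + 1) = w (v k)).
    { intros k. rewrite <- Heq. unfold shiftT, f. f_equal. f_equal.
      unfold v. apply functional_extensionality. intros i. f_equal. ring. }
    assert (gcond : forall k, w (v k) <> 0 -> u k <> e /\ forall i, i < k -> u i = e).
    { intros k Hk. destruct (Hw _ Hk) as [H|[H1 H2]].
      - exfalso. apply Hj. pose proof (f_equal (fun g => g (j - k)) H) as H'.
        simpl in H'. unfold v in H'. rewrite Z.sub_add in H'. exact H'.
      - split.
        + unfold v in H1. rewrite Z.add_0_l in H1. exact H1.
        + intros i Hi. pose proof (H2 (i - k) ltac:(lia)) as H'. unfold v in H'.
          rewrite Z.sub_add in H'. exact H'. }
    assert (guniq : forall k1 k2, w (v k1) <> 0 -> w (v k2) <> 0 -> k1 = k2).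
    { intros k1 k2 H1 H2. destruct (gcond _ H1) as [a1 b1]. destruct (gcond _ H2) as [a2 b2].
      destruct (Z.lt_total k1 k2) as [Hl'|[Hl'|Hl']]; auto.
      - exfalso. apply a1. apply b2. exact Hl'.
      - exfalso. apply a2. apply b1. exact Hl'. }
    assert (up : forall k n, (forall m, k <= m < k + Z.of_nat n -> w (v m) = 0) ->
                 f k = f (k + Z.of_nat n)).
    { intros k n. induction n as [|n IH]; intros H.
      - simpl. f_equal. ring.
      - rewrite IH by (intros m Hm; apply H; lia).
        pose proof (fstep (k + Z.of_nat n)) as Hs.
        rewrite (H (k + Z.of_nat n)) in Hs by lia.
        replace (k + Z.of_nat (S n)) with (k + Z.of_nat n + 1) by lia. lia. }
    assert (f0 : f 0 = z u).
    { unfold f, v. f_equal. apply functional_extensionality. intros i. f_equal. ring. }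
    rewrite <- f0.
    set (M := Z.abs j + Z.of_nat N).
    destruct (classic (exists m, 0 <= m /\ w (v m) <> 0)) as [[m1 [Hm1 Hm1']]|Hno].
    - pose proof (up (- M) (Z.to_nat M)) as Hu.
      replace (- M + Z.of_nat (Z.to_nat M)) with 0 in Hu by lia.
      rewrite <- Hu.
      + apply fz. lia.
      + intros m Hm. destruct (Z.eq_dec (w (v m)) 0) as [H|H]; auto.
        pose proof (guniq _ _ H Hm1'). lia.
    - pose proof (up 0 (Z.to_nat M)) as Hu.
      replace (0 + Z.of_nat (Z.to_nat M)) with M in Hu by lia.
      rewrite Hu.
      + apply fz. lia.
      + intros m Hm. destruct (Z.eq_dec (w (v m)) 0) as [H|H]; auto.
        exfalso. apply Hno. exists m. split; [lia|exact H]. }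
  split.
  - intros u Hu. destruct (classic (exists j, u j <> e)) as [[j Hj]|Hn].
    + exact (A u j Hj).
    + exfalso. apply Hu. apply functional_extensionality. intros i.
      destruct (classic (u i = e)); auto. exfalso. apply Hn. exists i. auto.
  - intros u. rewrite <- Heq. unfold shiftT.
    destruct (classic (exists j, u j <> e)) as [[j Hj]|Hn].
    + rewrite (A u j Hj). rewrite (A _ (j - 1)).
      * ring.
      * rewrite Z.sub_add. exact Hj.
    + assert (Hu : forall i, u i = e).
      { intros i. destruct (classic (u i = e)); auto. exfalso. apply Hn. exists i. auto. }
      replace (fun i => u (i + 1)) with u.
      * ring.
      * apply functional_extensionality. intros i. rewrite !Hu. reflexivity.
Qed.
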